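(* Fix a finite relational schema $\sigma$ and an integer $d\geq 2$, let $\mathbf{C}$ be a class of $\sigma$-databases of degree at most $d$ closed under removing tuples, and let $\mathbf{P}\subseteq\mathbf{C}$ be a property that is hyperfinite on $\mathbf{C}$. Let $\epsilon\in(0,1]$, and let $r\in\mathbb{N}$ and $\lambda\in(0,1]$ be such that for every $\mathcal{D}\in\mathbf{P}$ and $\mathcal{D}'\in\mathbf{C}$, if $\|\operatorname{h}_r(\mathcal{D})-\operatorname{h}_r(\mathcal{D}')\|_1\leq\lambda\min\{|D|,|D'|\}$ then $\mathcal{D}'$ is $\epsilon$-close to $\mathbf{P}$ in the $\operatorname{BDRD}_{+/-}$ model. Suppose the set $\operatorname{h}_r(\mathbf{P})$ is semilinear. Then there exist $n_{\min},n_{\max}\in\mathbb{N}$ and $f,\mu\in(0,1)$ such that for every $\mathcal{D}\in\mathbf{C}$ with $|D|>n_{\max}$: (1) if $\mathcal{D}\in\mathbf{P}$, then there exists $\mathcal{D}'\in\mathbf{P}$ with $n_{\min}\leq|D'|\leq n_{\max}$ and $\|\operatorname{dv}_r(\mathcal{D})-\operatorname{dv}_r(\mathcal{D}')\|_1\leq f-\mu$; and (2) if $\mathcal{D}$ is $\epsilon$-far from $\mathbf{P}$ in the $\operatorname{BDRD}_{+/-}$ model, then every $\mathcal{D}'\in\mathbf{P}$ with $n_{\min}\leq|D'|\leq n_{\max}$ satisfies $\|\operatorname{dv}_r(\mathcal{D})-\operatorname{dv}_r(\mathcal{D}')\|_1>f+\mu$.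
   Context: A schema $\sigma$ is a finite set of relation names with arities in $\mathbb{N}_{\geq 1}$. A $\sigma$-database $\mathcal{D}$ has a finite domain $D$ and a relation $R^{\mathcal{D}}\subseteq D^{\operatorname{ar}(R)}$ for each $R\in\sigma$. The Gaifman graph of $\mathcal{D}$ has vertex set $D$ and an edge between distinct $a,b$ whenever some tuple contains both; distances and connected components refer to it. The degree of an element is the number of tuples containing it; the degree of $\mathcal{D}$ is the maximum. Classes are closed under isomorphism; a property is an isomorphism-closed class. Hyperfinite: an $(\epsilon,k)$-partition of $\mathcal{D}$ on $n$ elements is obtained by removing at most $\epsilon n$ tuples so that every connected component has at most $k$ elements; $\mathbf{P}\subseteq\mathbf{C}$ is hyperfinite on $\mathbf{C}$ if there is a function $\rho$ such that for every $\epsilon\in(0,1]$ and $\mathcal{D}\in\mathbf{P}$ some $(\epsilon,\rho(\epsilon))$-partition of $\mathcal{D}$ lies in $\mathbf{C}$. Neighbourhoods: $N_r(a)$ is the set of elements at distance at most $r$ from $a$; the $r$-neighbourhood of $a$ is $(\mathcal{D}[N_r(a)],a)$; an $r$-type is a centre-preserving isomorphism class of $r$-neighbourhoods; $\operatorname{c}(r)$ is the (finite) number of $r$-types of degree at most $d$ over $\sigma$. $\operatorname{h}_r(\mathcal{D})\in\mathbb{N}^{\operatorname{c}(r)}$ counts the elements of each $r$-type; $\operatorname{dv}_r(\mathcal{D})=\operatorname{h}_r(\mathcal{D})/|D|$; $\operatorname{h}_r(\mathbf{P})=\{\operatorname{h}_r(\mathcal{D})\mid\mathcal{D}\in\mathbf{P}\}$.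 A set $M\subseteq\mathbb{N}^c$ is linear if $M=\{\bar v_0+a_1\bar v_1+\dots+a_k\bar v_k\mid a_i\in\mathbb{N}\}$ for some $\bar v_j\in\mathbb{N}^c$, and semilinear if it is a finite union of linear sets. $\operatorname{BDRD}_{+/-}$ model: $\operatorname{dist}_{+/-}(\mathcal{D},\mathcal{D}')$ is the minimum number of modifications (inserting an element, deleting an element together with all tuples containing it, inserting a tuple, deleting a tuple) applied to $\mathcal{D}$ and $\mathcal{D}'$ to make them isomorphic; they are $\epsilon$-close if $\operatorname{dist}_{+/-}(\mathcal{D},\mathcal{D}')\leq\epsilon d\min\{|D|,|D'|\}$, else $\epsilon$-far; $\mathcal{D}$ is $\epsilon$-close to $\mathbf{P}$ if it is $\epsilon$-close to some member of $\mathbf{P}$, else $\epsilon$-far from $\mathbf{P}$. *)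

(* Defs.v *)
From HB Require Import structures.
From mathcomp Require Import all_boot all_order all_algebra.
From mathcomp Require Import reals.
Set Implicit Arguments. Unset Strict Implicit. Unset Printing Implicit Defensive.
Import Order.TTheory GRing.Theory Num.Theory.

Record schema := Schema {
  rel_name : finType;
  arity : rel_name -> nat;
  arity_pos : forall R, 0 < arity R }.

Section Databases.
Variable s : schema.

Definition tagtuple (n : nat) : finType :=
  {R : rel_name s & (@arity s R).-tuple 'I_n}.
Definition tuples (n : nat) := {set tagtuple n}.

Definition elems n (t : tagtuple n) : seq 'I_n := tval (tagged t).

Definition maptag n m (f : 'I_n -> 'I_m) (t : tagtuple n) : tagtuple m :=
  Tagged (fun R => (@arity s R).-tuple 'I_m) (map_tuple f (tagged t)).

(* A database: domain 'I_dsize (|D| = dsize), and its set of tuples. *)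
Record db := DB { dsize : nat; dtup : tuples dsize }.

Definition deg n (T : tuples n) (a : 'I_n) : nat :=
  #|[set t in T | a \in elems t]|.
Definition deg_le n (T : tuples n) (d : nat) : bool := [forall a, deg T a <= d].

Definition adj n (T : tuples n) : rel 'I_n :=
  fun a b => (a != b) && [exists t in T, (a \in elems t) && (b \in elems t)].
Definition ball n (T : tuples n) (r : nat) (a : 'I_n) : {set 'I_n} :=
  iter r (fun B : {set 'I_n} => B :|: [set b | [exists c in B, adj T c b]]) [set a].
Definition comps_le n (T : tuples n) (k : nat) : bool :=
  [forall a, #|[set b | connect (adj T) a b]| <= k].

Definition hom_ok n m (T : tuples n) (U : tuples m) (f : {ffun 'I_n -> 'I_m}) :=
  [forall t : tagtuple n, (t \in T) == (maptag f t \in U)].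

Definition db_iso (D E : db) : Prop :=
  exists f : 'I_(dsize D) -> 'I_(dsize E),
    bijective f /\ forall t, (t \in dtup D) = (maptag f t \in dtup E).

(* bound on the size of an r-ball in a database of degree <= d *)
Definition maxar : nat := \max_(R : rel_name s) @arity s R.
Definition Mbound (d r : nat) : nat := (d * maxar + 1) ^ r.

Definition rstruct (m : nat) : finType := (tuples m * 'I_m)%type.
Definition rall (d r : nat) : finType := {m : 'I_(Mbound d r).+1 & rstruct m}.
Definition rtup d r (x : rall d r) : tuples (tag x) := (tagged x).1.
Definition rroot d r (x : rall d r) : 'I_(tag x) := (tagged x).2.

Definition rooted_iso d r (x y : rall d r) : bool :=
  [exists f : {ffun 'I_(tag x) -> 'I_(tag y)},
    [&& injectiveb f, f @: setT == setT, f (rroot x) == rroot y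
      & hom_ok (rtup x) (rtup y) f]].

Definition rvalid d r (x : rall d r) : bool :=
  (ball (rtup x) r (rroot x) == setT) && deg_le (rtup x) d.

(* canonical representative: the valid one of least enumeration rank
   in its isomorphism class *)
Definition rcanon d r (x : rall d r) : bool :=
  rvalid x && [forall y, rooted_iso y x ==> (enum_rank x <= enum_rank y)].

Definition rtype (d r : nat) : finType := {x : rall d r | rcanon x}.

Definition nbhd_iso n (T : tuples n) d r (a : 'I_n) (x : rall d r) : bool :=
  [exists f : {ffun 'I_(tag x) -> 'I_n},
    [&& injectiveb f, f @: setT == ball T r a, f (rroot x) == a
      & hom_ok (rtup x) T f]].

Definition hist (d r : nat) (D : db) : {ffun rtype d r -> nat} :=
  [ffun tau => #|[set a | nbhd_iso (dtup D) a (val tau : rall d r)]|].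

Definition partition_of (R : realFieldType) (eps : R) (k : nat) (D D' : db) : Prop :=
  exists T' : tuples (dsize D),
    [/\ D' = DB T', T' \subset dtup D,
        (#|dtup D :\: T'|%:R <= eps * (dsize D)%:R)%R & comps_le T' k].

Definition hyperfinite (R : realFieldType) (P C : db -> Prop) : Prop :=
  exists rho : R -> nat, forall eps : R, (0 < eps <= 1)%R ->
    forall D, P D -> exists D', partition_of eps (rho eps) D D' /\ C D'.

(* deleting an element (with all tuples containing it): D1 is D restricted
   to the image of an injection g : 'I_(|D|-1) -> 'I_|D| *)
Definition del_elem (D D1 : db) : Prop :=
  dsize D = (dsize D1).+1 /\
  exists g : 'I_(dsize D1) -> 'I_(dsize D),
    injective g /\ forall t, (t \in dtup D1) = (maptag g t \in dtup D).

Definition step (D D1 : db) : Prop :=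
  (exists n (T T1 : tuples n) (t : tagtuple n),
      D = DB T /\ D1 = DB T1 /\ (T1 = t |: T \/ T1 = T :\ t))
  \/ del_elem D D1 \/ del_elem D1 D.

Fixpoint steps (k : nat) (D E : db) : Prop :=
  match k with
  | 0 => D = E
  | k'.+1 => exists D1, step D D1 /\ steps k' D1 E
  end.

(* dist_{+/-}(D,D') <= eps d min(|D|,|D'|) *)
Definition eps_close (R : realFieldType) (d : nat) (eps : R) (D D' : db) : Prop :=
  exists (j j' : nat) (E E' : db),
    [/\ steps j D E, steps j' D' E', db_iso E E'
      & ((j + j')%:R <= eps * d%:R * (minn (dsize D) (dsize D'))%:R)%R].

Definition close_to (R : realFieldType) (d : nat) (eps : R) (P : db -> Prop) (D : db) :=
  exists D', P D' /\ eps_close d eps D D'.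

Definition far_from (R : realFieldType) (d : nat) (eps : R) (P : db -> Prop) (D : db) :=
  ~ close_to d eps P D.

Definition iso_closed (C : db -> Prop) := forall D E, C D -> db_iso D E -> C E.
Definition tuple_removal_closed (C : db -> Prop) :=
  forall n (T T' : tuples n), C (DB T) -> T' \subset T -> C (DB T').
Definition degree_le_class (d : nat) (C : db -> Prop) :=
  forall D, C D -> deg_le (dtup D) d.

Definition hR (R : realFieldType) d r (D : db) : {ffun rtype d r -> R} :=
  [ffun tau => ((hist d r D tau)%:R)%R].
Definition dv (R : realFieldType) d r (D : db) : {ffun rtype d r -> R} :=
  [ffun tau => ((hist d r D tau)%:R / (dsize D)%:R)%R].

End Databases.

Definition l1 (R : realFieldType) (I : finType) (u v : {ffun I -> R}) : R :=
  (\sum_(i : I) `|u i - v i|)%R.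

Definition lin_mem (I : finType) (v0 : {ffun I -> nat}) (vs : seq {ffun I -> nat})
    (v : {ffun I -> nat}) : Prop :=
  exists a : nat -> nat,
    forall i, v i = v0 i + \sum_(k < size vs) a k * (nth v0 vs k) i.

Definition semilinear_set (I : finType) (M : {ffun I -> nat} -> Prop) : Prop :=
  exists ls : seq ({ffun I -> nat} * seq {ffun I -> nat}),
    forall v, M v <-> exists2 p, p \in ls & lin_mem p.1 p.2 v.

Definition hist_set (s : schema) (d r : nat) (P : db s -> Prop)
    (v : {ffun rtype s d r -> nat}) : Prop :=
  exists D, P D /\ hist d r D = v.

(* Main.v *)
Require Import Defs.
From HB Require Import structures.
From mathcomp Require Import all_boot all_order all_algebra.
From mathcomp Require Import reals.
From mathcomp Require Import ring lra.
Import Order.TTheory GRing.Theory Num.Theory.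
Set Implicit Arguments. Unset Strict Implicit. Unset Printing Implicit Defensive.

Section Comb.
Variable s : schema.

Lemma elems_maptag n m (f : 'I_n -> 'I_m) (t : tagtuple s n) :
  elems (maptag f t) = map f (elems t).
Proof. by []. Qed.

Lemma maptag_comp n m k (f : 'I_m -> 'I_k) (g : 'I_n -> 'I_m) (t : tagtuple s n) :
  maptag f (maptag g t) = maptag (f \o g) t.
Proof.
case: t => R u; rewrite /maptag /=; congr Tagged; apply: val_inj.
by rewrite /= map_comp.
Qed.

Lemma maptag_eq_in n m (f g : 'I_n -> 'I_m) (t : tagtuple s n) :
  {in elems t, f =1 g} -> maptag f t = maptag g t.
Proof.
case: t => R u /= H; rewrite /maptag /=; congr Tagged; apply: val_inj.
by rewrite /=; apply/eq_in_map.
Qed.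

Lemma maptag_id_in n (f : 'I_n -> 'I_n) (t : tagtuple s n) :
  {in elems t, f =1 id} -> maptag f t = t.
Proof.
case: t => R u /= H; rewrite /maptag /=; congr Tagged; apply: val_inj.
by rewrite /= map_id_in.
Qed.

Lemma maptag_inj n m (f : 'I_n -> 'I_m) : injective f -> injective (maptag (s:=s) f).
Proof.
move=> fi [R1 u1] [R2 u2]; rewrite /maptag /= => E.
have eR : R1 = R2 by move: (congr1 tag E).
subst R2; congr Tagged; apply: val_inj; apply: (inj_map fi).
have := congr1 (fun t : tagtuple s m => elems t) E.
by rewrite /elems /=.
Qed.

Lemma card_bigcup_le (I T : finType) (A : {pred I}) (F : I -> {set T}) :
  #|\bigcup_(i in A) F i| <= \sum_(i in A) #|F i|.
Proof.
apply: (big_ind2 (fun (x : {set T}) y => #|x| <= y)).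
- by rewrite cards0.
- move=> x1 y1 x2 y2 h1 h2; apply: leq_trans (leq_card_setU _ _) _.
  exact: leq_add.
- by [].
Qed.

Section Ball.
Variables (n : nat) (T : tuples s n).

Lemma ball0 a : ball T 0 a = [set a]. Proof. by []. Qed.
Lemma ballS k a : ball T k.+1 a =
  ball T k a :|: [set b | [exists c in ball T k a, adj T c b]].
Proof. by []. Qed.

Lemma ball_sub_S k a : ball T k a \subset ball T k.+1 a.
Proof. by rewrite ballS subsetUl. Qed.

Lemma ball_mono k k' a : k <= k' -> ball T k a \subset ball T k' a.
Proof.
elim: k' => [|k' IH]; first by rewrite leqn0 => /eqP ->.
rewrite leq_eqVlt => /orP [/eqP -> //|hk].
by apply: subset_trans (IH hk) (ball_sub_S _ _).
Qed.

Lemma adj_ball k a b c : b \in ball T k a -> adj T b c -> c \in ball T k.+1 a.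
Proof.
by move=> hb hc; rewrite ballS in_setU; apply/orP; right; rewrite inE; apply/existsP; exists b; rewrite hb.
Qed.

Lemma ball_card d k a : deg_le T d -> #|ball T k a| <= (d * maxar s + 1) ^ k.
Proof.
move=> /forallP hdeg; elim: k => [|k IH]; first by rewrite ball0 cards1.
rewrite ballS; apply: leq_trans (leq_card_setU _ _) _.
set B := ball T k a.
have hN : [set b | [exists c in B, adj T c b]] \subset
   \bigcup_(c in B) \bigcup_(t in [set t in T | c \in elems t]) [set e in elems t].
  apply/subsetP => b; rewrite inE => /existsP [c /andP [cB /andP [_ /existsP [t /andP [tT /andP [ct bt]]]]]].
  apply/bigcupP; exists c => //; apply/bigcupP; exists t; first by rewrite inE tT ct.
  by rewrite inE.
apply: leq_trans (leq_add (leqnn _) (leq_trans (subset_leq_card hN) (card_bigcup_le _ _))) _.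
have hc : forall c, #|\bigcup_(t in [set t in T | c \in elems t]) [set e in elems t]| <= d * maxar s.
  move=> c; apply: leq_trans (card_bigcup_le _ _) _.
  have ht : forall t : tagtuple s n, #|[set e in elems t]| <= maxar s.
    move=> t; rewrite cardsE; apply: leq_trans (card_size _) _.
    rewrite /elems size_tuple /maxar; exact: (@leq_bigmax (rel_name s) (@arity s) (tag t)).
  apply: leq_trans; first by apply: leq_sum => t _; exact: ht.
  by rewrite sum_nat_const leq_mul2r hdeg orbT.
apply: leq_trans; first by apply: leq_add; [exact: leqnn| apply: leq_sum => c _; exact: hc].
rewrite sum_nat_const -{1}(muln1 #|B|) -mulnDr addnC expnSr mulnC.
by rewrite [X in X <= _]mulnC leq_mul2r IH orbT.
Qed.
End Ball.

Section Emb.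
Variables (n : nat) (T : tuples s n) (m : nat) (U : tuples s m) (rt : 'I_m)
  (f : 'I_m -> 'I_n) (r : nat) (a : 'I_n).
Hypotheses (fi : injective f) (fim : (f @: setT) = ball T r a) (frt : f rt = a)
  (fhom : forall t, (t \in U) = (maptag f t \in T)).

Let g (b : 'I_n) : 'I_m := odflt rt [pick j | f j == b].
Let fgK b : b \in ball T r a -> f (g b) = b.
Proof.
rewrite -fim => /imsetP [j _ ->]; rewrite /g.
by case: pickP => [j' /eqP //|/(_ j)]; rewrite eqxx.
Qed.
Let gfK j : g (f j) = j.
Proof. apply: fi; apply: fgK; rewrite -fim; exact: imset_f. Qed.

Lemma emb_ball_sub k : k <= r -> ball T k a \subset f @: ball U k rt.
Proof.
elim: k => [|k IH] hk.
  by rewrite ball0 sub1set -frt imset_f // ball0 set11.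
have IH' := IH (ltnW hk).
rewrite ballS; apply/subsetP => b; rewrite in_setU => /orP [hb|].
  have := subsetP IH' b hb; apply/subsetP; apply: imsetS; exact: ball_sub_S.
rewrite inE => /existsP [c /andP [cB /andP [ncb /existsP [t /andP [tT /andP [ct bt]]]]]].
have ht : forall e, e \in elems t -> e \in ball T r a.
  move=> e et; apply: (subsetP (ball_mono T a hk)).
  case: (eqVneq c e) => [<-|nce]; first exact: (subsetP (ball_sub_S _ _ _)).
  apply: (adj_ball cB); rewrite /adj nce /=; apply/existsP; exists t; by rewrite tT ct et.
have tK : maptag f (maptag g t) = t.
  rewrite maptag_comp; apply: maptag_id_in => e et /=; exact: fgK (ht e et).
have t'U : maptag g t \in U by rewrite fhom tK.
have /imsetP [c' c'B ec] := subsetP IH' c cB.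
have gc : g c = c' by rewrite ec gfK.
apply/imsetP; exists (g b); last by rewrite fgK // ht.
apply: (adj_ball c'B); rewrite /adj; apply/andP; split.
  apply/eqP => e; move: ncb; rewrite ec e fgK ?eqxx // ht //.
apply/existsP; exists (maptag g t); rewrite t'U /= elems_maptag -gc !map_f //.
Qed.

Lemma emb_ballT : ball U r rt = setT.
Proof.
apply/eqP; rewrite eqEsubset subsetT /=; apply/subsetP => j _.
have : f j \in ball T r a by rewrite -fim imset_f.
move/(subsetP (emb_ball_sub (leqnn r)))=> /imsetP [j' hj' /fi ->] //.
Qed.

Lemma emb_deg d : deg_le T d -> deg_le U d.
Proof.
move=> /forallP hd; apply/forallP => e; apply: leq_trans (hd (f e)).
rewrite /deg -(card_imset _ (maptag_inj fi)); apply: subset_leq_card.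
apply/subsetP => t' /imsetP [t]; rewrite inE => /andP [tU et] ->.
by rewrite inE -fhom tU elems_maptag map_f.
Qed.
End Emb.

Section Types.
Variables (d r : nat) (n : nat) (T : tuples s n).

Lemma homP m k (U : tuples s m) (V : tuples s k) (f : {ffun 'I_m -> 'I_k}) :
  hom_ok U V f -> forall t, (t \in U) = (maptag f t \in V).
Proof. by move=> /forallP h t; apply/eqP; exact: h. Qed.

Lemma nbhd_valid a (x : rall s d r) : deg_le T d -> nbhd_iso T a x -> rvalid x.
Proof.
move=> hd /existsP [f /and4P [/injectiveP fi /eqP fim /eqP frt /homP hom]].
by rewrite /rvalid (emb_ballT fi fim frt hom) eqxx (emb_deg fi hom hd).
Qed.

Lemma iso_nbhd a (x y : rall s d r) :
  rooted_iso y x -> nbhd_iso T a x -> nbhd_iso T a y.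
Proof.
move=> /existsP [g /and4P [/injectiveP gi /eqP gim /eqP grt /homP ghom]].
move=> /existsP [f /and4P [/injectiveP fi /eqP fim /eqP frt /homP fhom]].
apply/existsP; exists [ffun i => f (g i)]; apply/and4P; split.
- by apply/injectiveP => i j; rewrite !ffunE => /fi /gi.
- have -> : [ffun i => f (g i)] @: setT = f @: (g @: setT).
    by rewrite -imset_comp; apply: eq_imset => i; rewrite ffunE.
  by rewrite gim fim.
- by rewrite ffunE grt frt.
- apply/forallP => t; apply/eqP.
  have -> : maptag [ffun i => f (g i)] t = maptag f (maptag g t).
    by rewrite maptag_comp; apply: maptag_eq_in => i _; rewrite ffunE.
  by rewrite ghom fhom.
Qed.

Lemma nbhd_rooted a (x y : rall s d r) :
  nbhd_iso T a x -> nbhd_iso T a y -> rooted_iso x y.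
Proof.
move=> /existsP [f /and4P [/injectiveP fi /eqP fim /eqP frt /homP fhom]].
move=> /existsP [f' /and4P [/injectiveP fi' /eqP fim' /eqP frt' /homP fhom']].
pose g i := odflt (rroot y) [pick j | f' j == f i].
have fg i : f' (g i) = f i.
  have : f i \in f' @: setT by rewrite fim' -fim imset_f.
  case/imsetP => j _ ej; rewrite /g; case: pickP => [j' /eqP //|/(_ j)].
  by rewrite ej eqxx.
have gi : injective g by move=> i j /(congr1 f'); rewrite !fg => /fi.
apply/existsP; exists [ffun i => g i]; apply/and4P; split.
- by apply/injectiveP => i j; rewrite !ffunE => /gi.
- have -> : [ffun i => g i] @: setT = g @: setT by apply: eq_imset => i; rewrite ffunE.
  rewrite eqEcard subsetT cardsT card_ord card_imset // cardsT card_ord.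
  move=> {gi}; move: (card_imset setT fi) (card_imset setT fi'). by rewrite fim fim' !cardsT !card_ord => <- <-; rewrite leqnn.
- by rewrite ffunE; apply/eqP; apply: fi'; rewrite fg frt frt'.
- apply/forallP => t; apply/eqP.
  have E : maptag f t = maptag f' (maptag [ffun i => g i] t).
    by rewrite maptag_comp; apply: maptag_eq_in => i _ /=; rewrite ffunE fg.
  by rewrite fhom fhom' E.
Qed.

Lemma nbhd_exists a : deg_le T d -> exists x : rall s d r, nbhd_iso T a x.
Proof.
move=> hd; set B := ball T r a.
have aB : a \in B by apply: (subsetP (ball_mono T a (leq0n r))); rewrite ball0 set11.
have hm : #|B| < (Mbound s d r).+1 by rewrite ltnS /Mbound ball_card.
pose U := [set t : tagtuple s #|B| | maptag (fun i => enum_val i) t \in T].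
exists (existT (fun m : 'I_(Mbound s d r).+1 => rstruct s m) (Ordinal hm)
   (U, enum_rank_in aB a)).
apply/existsP; exists [ffun i : 'I_#|B| => (enum_val i : 'I_n)]; apply/and4P; split.
- by apply/injectiveP => i j; rewrite !ffunE => /enum_val_inj.
- apply/eqP/eqP; rewrite eqEsubset; apply/andP; split; apply/subsetP => b.
    by case/imsetP => i _ ->; rewrite ffunE enum_valP.
  by move=> bB; apply/imsetP; exists (enum_rank_in aB b) => //; rewrite ffunE enum_rankK_in.
- by rewrite /rroot /= ffunE enum_rankK_in.
- apply/forallP => t; rewrite /rtup /= inE; apply/eqP.
  by rewrite (maptag_eq_in (g := [ffun i : 'I_#|B| => (enum_val i : 'I_n)]) (f := fun i => enum_val i)) // => i _; rewrite ffunE.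
Qed.

Lemma canon_exists a : deg_le T d -> exists tau : rtype s d r, nbhd_iso T a (val tau).
Proof.
move=> hd; have [x0 hx0] := nbhd_exists a hd.
have [x hx hmin] := @arg_minnP _ x0 (fun y => nbhd_iso T a y) (fun y => enum_rank y) hx0.
have hc : rcanon x.
  rewrite /rcanon (nbhd_valid hd hx) /=; apply/forallP => y; apply/implyP => hyx.
  exact: hmin (iso_nbhd hyx hx).
by exists (Sub x hc).
Qed.

Lemma canon_unique a (t1 t2 : rtype s d r) :
  nbhd_iso T a (val t1) -> nbhd_iso T a (val t2) -> t1 = t2.
Proof.
move=> h1 h2; apply: val_inj; apply: enum_rank_inj; apply: val_inj; apply/eqP.
have c1 := valP t1; have c2 := valP t2.
move: c1 c2 => /andP [_ /forallP c1] /andP [_ /forallP c2].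
rewrite eqn_leq (implyP (c1 (val t2)) (nbhd_rooted h2 h1)).
by rewrite (implyP (c2 (val t1)) (nbhd_rooted h1 h2)).
Qed.
End Types.

Lemma hist_sum d r (D : db s) : deg_le (dtup D) d ->
  \sum_(tau : rtype s d r) hist d r D tau = dsize D.
Proof.
move=> hd.
transitivity (\sum_(tau : rtype s d r) \sum_(a : 'I_(dsize D))
    (nbhd_iso (dtup D) a (val tau) : nat)).
  apply: eq_bigr => tau _; rewrite ffunE -sum1_card big_mkcond /=.
  by apply: eq_bigr => a _; rewrite inE; case: nbhd_iso.
rewrite exchange_big /= -[X in _ = X]card_ord -sum1_card.
apply: eq_bigr => a _.
have [t0 h0] := canon_exists r a hd.
rewrite (bigD1 t0) //= h0 big1 ?addn0 // => t /negbTE nt.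
case h : nbhd_iso => //; by rewrite (canon_unique h h0) eqxx in nt.
Qed.
End Comb.


Local Open Scope ring_scope.

Section Analytic.
Variable R : realType.

Lemma sum_le_l1 (I : finType) (x y : I -> R) :
  `|\sum_i x i - \sum_i y i| <= \sum_i `|x i - y i|.
Proof. by rewrite -sumrB; apply: ler_norm_sum. Qed.

Lemma normalize_l1 (I : finType) (x y : I -> R) (X Y : R) :
  (forall i, 0 <= y i) -> X = \sum_i x i -> Y = \sum_i y i -> 0 < X -> 0 < Y ->
  \sum_i `|x i / X - y i / Y| <= 2 * (\sum_i `|x i - y i|) / X.
Proof.
move=> y0 eX eY X0 Y0.
have hterm i : `|x i / X - y i / Y| <= `|x i - y i| / X + y i * (`|Y - X| / (X * Y)).
  have -> : x i / X - y i / Y = (x i - y i) / X + y i * ((Y - X) / (X * Y)).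
    by field; apply/andP; split; rewrite gt_eqF.
  apply: le_trans (ler_normD _ _) _.
  rewrite !normrM normfV normfV normrM (gtr0_norm X0) (gtr0_norm Y0) (ger0_norm (y0 i)).
  by [].
apply: le_trans (ler_sum _ (fun i _ => hterm i)) _.
rewrite big_split /= -mulr_suml -mulr_suml -eY.
have -> : Y * (`|Y - X| / (X * Y)) = `|Y - X| / X.
  by field; apply/andP; split; rewrite gt_eqF.
have hd : `|Y - X| <= \sum_i `|x i - y i|.
  rewrite distrC eX eY; exact: sum_le_l1.
rewrite -mulrDl -mulrA [X in _ <= X]mulrA ler_pM2r ?invr_gt0 //.
lra.
Qed.

Definition lc (I : finType) (v0 : {ffun I -> nat}) (vs : seq {ffun I -> nat}) (a : nat -> nat) (i : I) : nat :=
  v0 i + \sum_(k < size vs) a k * (nth v0 vs k) i.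

Definition Wt (I : finType) (v0 : {ffun I -> nat}) (vs : seq {ffun I -> nat}) : nat :=
  \sum_i (v0 i + \sum_(k < size vs) (nth v0 vs k) i).

Lemma lin_err (I : finType) (v0 : {ffun I -> nat}) (vs : seq {ffun I -> nat})
  (a b : nat -> nat) (t : R) : 0 <= t ->
  (forall k, (b k)%:R <= t * (a k)%:R < (b k)%:R + 1) ->
  \sum_i `| t * (lc v0 vs a i)%:R - (lc v0 vs b i)%:R | <= Num.max 1 t * (Wt v0 vs)%:R.
Proof.
move=> t0 hab; rewrite /Wt natr_sum mulr_sumr; apply: ler_sum => i _.
set M := Num.max 1 t.
have M1 : 1 <= M by rewrite le_max lexx.
have Mt : t <= M by rewrite le_max lexx orbT.
rewrite /lc !natrD !natr_sum.
set w := fun k : 'I_(size vs) => ((nth v0 vs k) i)%:R : R.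
have w0 k : 0 <= w k by rewrite /w ler0n.
have -> : t * ((v0 i)%:R + \sum_(k < size vs) ((a k * nth v0 vs k i)%N)%:R) -
    ((v0 i)%:R + \sum_(k < size vs) ((b k * nth v0 vs k i)%N)%:R) =
    (t - 1) * (v0 i)%:R + \sum_(k < size vs) (t * (a k)%:R - (b k)%:R) * w k.
  rewrite mulrDr mulr_sumr opprD addrACA -sumrB; congr (_ + _).
    by rewrite mulrBl mul1r.
  by apply: eq_bigr => k _; rewrite /w !natrM mulrBl mulrA.
have hs0 : 0 <= \sum_(k < size vs) (t * (a k)%:R - (b k)%:R) * w k.
  apply: sumr_ge0 => k _; apply: mulr_ge0 => //.
  by have /andP [h1 _] := hab k; rewrite subr_ge0.
have hs1 : \sum_(k < size vs) (t * (a k)%:R - (b k)%:R) * w k <= \sum_(k < size vs) w k.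
  apply: ler_sum => k _; have /andP [h1 h2] := hab k.
  have := w0 k; nra.
rewrite ler_norml; apply/andP; split.
  have hv : 0 <= ((v0 i)%:R : R) by rewrite ler0n.
  have hw : 0 <= \sum_(k < size vs) w k by apply: sumr_ge0.
  rewrite mulrDr; nra.
have hv : 0 <= ((v0 i)%:R : R) by rewrite ler0n.
rewrite mulrDr; rewrite /w in hs1 *; nra.
Qed.
End Analytic.

Lemma div_bounds (R : realType) (x N n : nat) : (0 < n)%N ->
  ((x * N %/ n)%N)%:R <= (N%:R / n%:R : R) * x%:R < ((x * N %/ n)%N)%:R + 1.
Proof.
move=> n0; have n0' : (0 : R) < n%:R by rewrite ltr0n.
have -> : (N%:R / n%:R : R) * x%:R = (x * N)%:R / n%:R by rewrite natrM; field; rewrite gt_eqF.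
rewrite ler_pdivlMr // ltr_pdivrMr // -natrM ler_nat leq_divM /=.
by rewrite natr1 -natrM ltr_nat ltn_ceil.
Qed.

Lemma mem_sum_le (T : eqType) (ls : seq T) (F : T -> nat) p :
  p \in ls -> (F p <= \sum_(q <- ls) F q)%N.
Proof.
elim: ls => [//|q ls IH]; rewrite in_cons big_cons => /orP [/eqP ->|h].
  exact: leq_addr.
by apply: leq_trans (IH h) _; apply: leq_addl.
Qed.

Lemma hRE (R : realType) (s : schema) d r (D : db s) i :
  hR R d r D i = (hist d r D i)%:R.
Proof. by rewrite /hR ffunE. Qed.
Lemma dvE (R : realType) (s : schema) d r (D : db s) i :
  dv R d r D i = (hist d r D i)%:R / (dsize D)%:R.
Proof. by rewrite /dv ffunE. Qed.


Unset Implicit Arguments. Set Strict Implicit. Set Printing Implicit Defensive.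

Theorem theorem9 (R : realType) (s : schema) (d : nat) (C P : db s -> Prop)
  (hd : (2 <= d)%N)
  (hCdeg : degree_le_class d C)
  (hCrem : tuple_removal_closed C)
  (hCiso : iso_closed C)
  (hPiso : iso_closed P)
  (hPC : forall D, P D -> C D)
  (hhyp : hyperfinite R P C)
  (eps : R) (heps : 0 < eps <= 1)
  (r : nat) (lam : R) (hlam : 0 < lam <= 1)
  (hloc : forall D D' : db s, P D -> C D' ->
     l1 (hR R d r D) (hR R d r D') <= lam * (minn (dsize D) (dsize D'))%:R ->
     close_to d eps P D')
  (hsl : semilinear_set (@hist_set s d r P)) :
  exists (nmin nmax : nat) (f mu : R),
    [/\ 0 < f < 1, 0 < mu < 1 &
    forall D : db s, C D -> (nmax < dsize D)%N ->
      (P D -> exists D' : db s,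
          [/\ P D', (nmin <= dsize D' <= nmax)%N &
              l1 (dv R d r D) (dv R d r D') <= f - mu])
      /\
      (far_from d eps P D -> forall D' : db s, P D' ->
          (nmin <= dsize D' <= nmax)%N ->
          l1 (dv R d r D) (dv R d r D') > f + mu)].
Proof.
have [ls hls] := hsl.
pose W (p : {ffun rtype s d r -> nat} * seq {ffun rtype s d r -> nat}) := Wt p.1 p.2.
pose V := (\sum_(q <- ls) W q).+1.
have hWV p : p \in ls -> (W p < V)%N by move=> pls; rewrite ltnS mem_sum_le.
have lam0 : 0 < lam by case/andP: hlam.
have lam1 : lam <= 1 by case/andP: hlam.
pose K := (Num.bound (32 * V%:R / lam)).+1.
have hK : 32 * V%:R < lam * K%:R.
  have h0 : 0 <= 32 * V%:R / lam by apply: divr_ge0; [apply: mulr_ge0; rewrite ler0n | exact: ltW].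
  have := archi_boundP h0; rewrite ltr_pdivrMr // => h.
  apply: lt_le_trans h _; rewrite mulrC; apply: ler_wpM2l; [exact: ltW | by rewrite ler_nat /K leqnSn].
have K1 : (1 <= K)%N by [].
have K0 : (0 : R) < K%:R by rewrite ltr0n.
have V0 : (0 : R) < V%:R by rewrite ltr0n.
exists K, (K + 2 * V)%N, (3 * lam / 32), (lam / 32).
split; [apply/andP; split; lra | apply/andP; split; lra |].
move=> D CD hn; have hdD := hCdeg D CD.
have n0 : (0 < dsize D)%N by apply: leq_ltn_trans hn.
have hsumD := hist_sum r hdD.
split.
- move=> PD.
  have [p pls [a ha]] : exists2 p, p \in ls & lin_mem p.1 p.2 (hist d r D).
    by apply: (proj1 (hls _)); exists D; split.
  set n := dsize D in hn n0 hsumD *.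
  pose N := (K + V)%N.
  pose b k := (a k * N %/ n)%N.
  have [D' [PD' hD']] : hist_set P [ffun i => lc p.1 p.2 b i].
    by apply: (proj2 (hls _)); exists p => //; exists b => i; rewrite ffunE.
  have hdD' := hCdeg D' (hPC D' PD').
  have hsumD' := hist_sum r hdD'.
  pose t : R := N%:R / n%:R.
  have n0' : (0:R) < n%:R by rewrite ltr0n.
  have t0 : 0 <= t by rewrite /t divr_ge0 // ler0n.
  have t1 : t <= 1.
    rewrite /t ler_pdivrMr // mul1r ler_nat /N; apply: ltnW; apply: leq_ltn_trans hn.
    by rewrite leq_add2l leq_pmull.
  have hab k := @div_bounds R (a k) N n n0.
  have err := @lin_err R _ p.1 p.2 a b t t0 hab.
  rewrite (max_l t1) mul1r in err.
  have hx i : hist d r D i = lc p.1 p.2 a i by rewrite ha.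
  have hy i : hist d r D' i = lc p.1 p.2 b i by rewrite hD' ffunE.
  have E : \sum_i `|t * (hist d r D i)%:R - (hist d r D' i)%:R| <= V%:R.
    have -> : \sum_i `|t * (hist d r D i)%:R - (hist d r D' i)%:R| =
       \sum_i `|t * (lc p.1 p.2 a i)%:R - (lc p.1 p.2 b i)%:R| :> R.
      by apply: eq_bigr => i _; rewrite hx hy.
    apply: le_trans err _; rewrite ler_nat; exact: ltnW (hWV p pls).
  have sx : \sum_i t * (hist d r D i)%:R = N%:R.
    by rewrite -mulr_sumr -natr_sum hsumD /t; field; exact: lt0r_neq0.
  have sy : \sum_i ((hist d r D' i)%:R : R) = (dsize D')%:R by rewrite -natr_sum hsumD'.
  have hdn : `|N%:R - (dsize D')%:R| <= (V%:R : R).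
    by rewrite -sx -sy; apply: le_trans (sum_le_l1 _ _) E.
  move: hdn; rewrite ler_norml /N natrD => /andP [h1 h2].
  have hKn : (K <= dsize D')%N by rewrite -(ler_nat R); lra.
  have hn' : (dsize D' <= K + 2 * V)%N by rewrite -(ler_nat R) natrD natrM; lra.
  exists D'; split => //; first by rewrite hKn hn'.
  have n'0 : (0:R) < (dsize D')%:R by rewrite ltr0n; apply: leq_trans hKn.
  have N0 : (0:R) < N%:R by rewrite ltr0n /N addn_gt0 K1.
  rewrite /l1.
  have -> : \sum_i `|dv R d r D i - dv R d r D' i| = \sum_i
      `|(t * (hist d r D i)%:R) / N%:R - (hist d r D' i)%:R / (dsize D')%:R|.
    apply: eq_bigr => i _; rewrite !ffunE /t; congr (`|_ - _|).
    by field; rewrite !lt0r_neq0.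
  apply: le_trans (normalize_l1 (x := fun i => t * (hist d r D i)%:R)
     (y := fun i => (hist d r D' i)%:R) _ (esym sx) (esym sy) N0 n'0) _.
    by move=> i; rewrite ler0n.
  rewrite ler_pdivrMr //.
  have hKN : lam * K%:R <= lam * N%:R.
    by apply: ler_wpM2l; [exact: ltW | rewrite ler_nat /N leq_addr].
  lra.
- move=> far D' PD' /andP [hK' hn'].
  rewrite ltNge; apply/negP => hle; apply: far.
  set n := dsize D in hn n0 hsumD *.
  set n' := dsize D' in hK' hn' hle *.
  have [p pls [a ha]] : exists2 p, p \in ls & lin_mem p.1 p.2 (hist d r D').
    by apply: (proj1 (hls _)); exists D'; split.
  have n'0 : (0 < n')%N by apply: leq_trans hK'.
  pose b k := (a k * n %/ n')%N.
  have [D'' [PD'' hD'']] : hist_set P [ffun i => lc p.1 p.2 b i].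
    by apply: (proj2 (hls _)); exists p => //; exists b => i; rewrite ffunE.
  have hdD' := hCdeg D' (hPC D' PD').
  have hsumD' := hist_sum r hdD'.
  have hdD'' := hCdeg D'' (hPC D'' PD'').
  have hsumD'' := hist_sum r hdD''.
  pose t : R := n%:R / n'%:R.
  have n0' : (0:R) < n%:R by rewrite ltr0n.
  have n'0' : (0:R) < n'%:R by rewrite ltr0n.
  have t0 : 0 <= t by rewrite /t divr_ge0 // ler0n.
  have t1 : 1 <= t.
    by rewrite /t ler_pdivlMr // mul1r ler_nat; apply: ltnW; apply: leq_ltn_trans hn.
  have hab k := @div_bounds R (a k) n n' n'0.
  have err := @lin_err R _ p.1 p.2 a b t t0 hab.
  rewrite (max_r t1) in err.
  have hx i : hist d r D' i = lc p.1 p.2 a i by rewrite ha.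
  have hy i : hist d r D'' i = lc p.1 p.2 b i by rewrite hD'' ffunE.
  have E : \sum_i `|t * (hist d r D' i)%:R - (hist d r D'' i)%:R| <= t * V%:R.
    have -> : \sum_i `|t * (hist d r D' i)%:R - (hist d r D'' i)%:R| =
       \sum_i `|t * (lc p.1 p.2 a i)%:R - (lc p.1 p.2 b i)%:R| :> R.
      by apply: eq_bigr => i _; rewrite hx hy.
    apply: le_trans err _; apply: ler_wpM2l => //; rewrite ler_nat; exact: ltnW (hWV p pls).
  have htV : t * V%:R <= lam * n%:R / 32.
    have hKn' : lam * K%:R <= lam * n'%:R.
      by apply: ler_wpM2l; [exact: ltW | rewrite ler_nat].
    have h32 : 32 * V%:R <= lam * n'%:R by lra.
    have := ler_wpM2l (ltW n0') h32 => h.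
    rewrite /t mulrAC ler_pdivrMr //; lra.
  have hL : l1 (hR R d r D'') (hR R d r D) <=
      \sum_i `|t * (hist d r D' i)%:R - (hist d r D'' i)%:R| +
      n%:R * l1 (dv R d r D) (dv R d r D').
    rewrite /l1 mulr_sumr -big_split; apply: ler_sum => i _; rewrite !hRE !dvE.
    have -> : ((hist d r D'' i)%:R - (hist d r D i)%:R : R) =
       - (t * (hist d r D' i)%:R - (hist d r D'' i)%:R) -
       n%:R * ((hist d r D i)%:R / n%:R - (hist d r D' i)%:R / n'%:R).
      by rewrite /t; field; rewrite !lt0r_neq0.
    apply: le_trans (ler_normB _ _) _.
    by rewrite normrN normrM (gtr0_norm n0').
  have hL2 : l1 (hR R d r D'') (hR R d r D) <= lam * n%:R / 4.
    apply: le_trans hL _.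
    have h : n%:R * l1 (dv R d r D) (dv R d r D') <= lam * n%:R / 8.
      apply: le_trans (ler_wpM2l (ltW n0') hle) _.
      by rewrite le_eqVlt; apply/orP; left; apply/eqP; field.
    have hM0 : 0 <= lam * n%:R by rewrite mulr_ge0 // ltW.
    move: E htV h hM0.
    generalize (\sum_i `|t * (hist d r D' i)%:R - (hist d r D'' i)%:R|) (t * V%:R)
      (n%:R * l1 (dv R d r D) (dv R d r D')) (lam * n%:R) => S tv L M E1 E2 E3 E4.
    lra.
  have sx : \sum_i ((hist d r D'' i)%:R : R) = (dsize D'')%:R by rewrite -natr_sum hsumD''.
  have sy : \sum_i ((hist d r D i)%:R : R) = n%:R by rewrite -natr_sum hsumD.
  have hdn : `|(dsize D'')%:R - n%:R| <= l1 (hR R d r D'') (hR R d r D).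
    rewrite -sx -sy /l1; apply: le_trans (sum_le_l1 _ _) _.
    by apply: ler_sum => i _; rewrite !hRE.
  move: hdn; rewrite ler_norml => /andP [h1 h2].
  apply: (hloc D'' D PD'' CD); refine (le_trans hL2 _).
  have hMn : lam * n%:R <= n%:R by rewrite -[X in _ <= X]mul1r ler_wpM2r // ltW.
  have hM0 : 0 <= lam * n%:R by rewrite mulr_ge0 // ltW.
  have [hle2|hlt2] := leqP (dsize D'') n.
    have h4 : n%:R / 4 <= ((dsize D'')%:R : R).
      move: hL2 h1 hMn; generalize (lam * n%:R) (l1 (hR R d r D'') (hR R d r D)) => M L.
      move=> *; lra.
    have := ler_wpM2l (ltW lam0) h4.
    have -> : lam * (n%:R / 4) = lam * n%:R / 4 by rewrite mulrA.
    by [].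
  move: hM0; generalize (lam * n%:R) => M.
  move=> *; lra.
Qed.
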